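(* Let $\mathbf{k}$ be a field of characteristic $0$, $n\ge2$ and $\lambda$ a partition with $|\lambda|<n$ and $n-|\lambda|$ even. Then there is a finite set $F\subset\mathbb{Q}$ such that for every $m\in\mathbf{k}$ with $m\notin\mathcal{S}_n\cup F$, one has $\rho_\lambda(T)\neq0$, where $\rho_\lambda$ is the irreducible representation of $Br_n(m)$ indexed by $\lambda$ and $T=\sum_{1\le i<j\le n}t_{ij}$.
   Context: $Br_n(m)$ is the Brauer algebra over $\mathbf{k}$ with basis the Brauer diagrams on $n$ top and $n$ bottom points, product by stacking (second factor below) with closed loops replaced by $m$; $s_{ij}$ is the transposition diagram, $p_{ij}$ the diagram joining top $i$ to top $j$ and bottom $i$ to bottom $j$ with other strands vertical, $t_{ij}=s_{ij}-p_{ij}$. For a partition $\mu$ with $|\mu|\le n$, $n-|\mu|$ even, $P_\mu\in\mathbb{Q}[m]$ is the polynomial equal, at every sufficiently large integer $m$, to the dimension of the irreducible $O(m)$-module indexed by $\mu$; $\mathcal{S}_n=\{m\mid\exists\mu,\ |\mu|\le n,\ P_\mu(m)=0\}\subset\mathbb{Z}$. For $m\notin\mathcal{S}_n$, $Br_n(m)$ is split semisimple and its irreducible representations are indexed (Wenzl's parametrization) by the partitions $\mu$ with $|\mu|\le n$, $n-|\mu|$ even; those with $|\mu|=n$ are exactly those factoring through $\mathbf{k}\mathfrak{S}_n=Br_n(m)/(p_{12})$. *)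

(* Defs.v *)
From HB Require Import structures.
From mathcomp Require Import all_boot all_order all_algebra all_fingroup.
Set Implicit Arguments. Unset Strict Implicit. Unset Printing Implicit Defensive.
Import GRing.Theory.
Local Open Scope ring_scope.

(* Points: inl i = top point i, inr i = bottom point i.               *)
(* A diagram is a fixed-point-free involution of the 2n points.       *)
Definition pt (n : nat) := ('I_n + 'I_n)%type.

Definition is_diag n (f : {ffun pt n -> pt n}) : bool :=
  [forall x, (f (f x) == x) && (f x != x)].

Definition diagram n := {f : {ffun pt n -> pt n} | is_diag f}.

Definition isbot n (x : pt n) : bool := if x is inr _ then true else false.
Definition istop n (x : pt n) : bool := if x is inl _ then true else false.

Definition id_fun n : {ffun pt n -> pt n} :=
  [ffun x => match x with inl i => inr i | inr i => inl i end].

Lemma id_diag_ok n : is_diag (id_fun n).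
Proof. by apply/forallP => -[i|i]; rewrite !ffunE /= eqxx. Qed.

Definition id_diag n : diagram n := exist _ (id_fun n) (id_diag_ok n).

(* Build a diagram from a function which is (in all our uses) a
   fixed-point-free involution; the default is never used. *)
Definition mkdiag n (f : pt n -> pt n) : diagram n :=
  odflt (id_diag n) (insub [ffun x => f x]).

(* Following a strand through the middle row (bottom of d1 = top of d2).
   side = true : we arrived at middle point j through d1, continue in d2;
   side = false: we arrived at middle point j through d2, continue in d1. *)
Fixpoint follow n (d1 d2 : diagram n) (fuel : nat) (side : bool) (j : 'I_n)
  : pt n :=
  match fuel with
  | 0 => inl j
  | f.+1 =>
    if side then
      match val d2 (inl j) with inr b => inr b | inl j' => follow d1 d2 f false j' end
    else
      match val d1 (inr j) with inl a => inl a | inr j' => follow d1 d2 f true j' end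
  end.

Definition comp_fun n (d1 d2 : diagram n) (x : pt n) : pt n :=
  match x with
  | inl a => match val d1 (inl a) with
             | inl a' => inl a'
             | inr j => follow d1 d2 n.+1 true j end
  | inr b => match val d2 (inr b) with
             | inr b' => inr b'
             | inl j => follow d1 d2 n.+1 false j end
  end.

Definition diag_mul n (d1 d2 : diagram n) : diagram n := mkdiag (comp_fun d1 d2).

(* closed loops created in the middle row *)
Definition mid_edge n (d1 d2 : diagram n) : rel 'I_n :=
  fun j j' => (val d1 (inr j) == inr j') || (val d2 (inl j) == inl j').

Definition inner n (d1 d2 : diagram n) (j : 'I_n) : bool :=
  isbot (val d1 (inr j)) && istop (val d2 (inl j)).

Definition nloops n (d1 d2 : diagram n) : nat :=
  n_comp (mid_edge d1 d2)
    [pred j | [forall j', connect (mid_edge d1 d2) j j' ==> inner d1 d2 j']].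

(* elements: K-linear combinations of diagrams *)
Notation Br K n := {ffun diagram n -> K}.

Definition bd (K : fieldType) n (d : diagram n) : Br K n :=
  [ffun d' => (d' == d)%:R].

Definition bmul (K : fieldType) n (m : K) (a b : Br K n) : Br K n :=
  [ffun d => \sum_(d1 : diagram n) \sum_(d2 : diagram n)
     (if diag_mul d1 d2 == d then a d1 * b d2 * m ^+ nloops d1 d2 else 0)].

Definition swap n (i j a : 'I_n) : 'I_n := if a == i then j else if a == j then i else a.

Definition s_diag n (i j : 'I_n) : diagram n :=
  mkdiag (fun x : pt n => match x with
                          | inl a => inr (swap i j a)
                          | inr b => inl (swap i j b) end).

Definition p_diag n (i j : 'I_n) : diagram n :=
  mkdiag (fun x : pt n => match x with
                          | inl a => if (a == i) || (a == j) then inl (swap i j a) else inr a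
                          | inr b => if (b == i) || (b == j) then inr (swap i j b) else inl b
                          end).

Definition t_elt (K : fieldType) n (i j : 'I_n) : Br K n :=
  bd K (s_diag i j) - bd K (p_diag i j).

Definition Tsum (K : fieldType) n : Br K n :=
  \sum_(i : 'I_n) \sum_(j : 'I_n | (i < j)%N) t_elt K i j.

Definition is_partition (l : seq nat) : bool :=
  sorted geq l && all (fun x => 0 < x)%N l.

(* conjugate partition, 0-indexed: conj_part l j = #{ rows of length > j } *)
Definition conj_part (l : seq nat) (j : nat) : nat := count (fun x => j < x)%N l.

(* For the cell (i,j) (0-indexed, j < l_i): *)
Definition hook (l : seq nat) (i j : nat) : nat :=
  (nth 0 l i - j + conj_part l j - i - 1)%N.

(* El Samra--King content: with 1-indexed I = i+1, J = j+1,
   r = l_I + l_J - I - J            if I <= J,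
   r = - l'_I - l'_J + I + J - 2    if I > J. *)
Definition okcontent (l : seq nat) (i j : nat) : int :=
  if (i <= j)%N then (nth 0 l i + nth 0 l j)%:Z - (i + j + 2)%:Z
  else (i + j)%:Z - (conj_part l i + conj_part l j)%:Z.

(* P_mu(N) = prod over cells (N + r)/h : dimension of the irreducible
   O(N)-module [mu] for N large (El Samra--King). *)
Definition Pdim (l : seq nat) : {poly rat} :=
  \prod_(i < size l) \prod_(j < nth 0 l i)
     (('X + (okcontent l i j)%:~R%:P) * ((hook l i j)%:R^-1)%:P).

Definition in_Sn (n : nat) (z : int) : Prop :=
  exists mu : seq nat, [/\ is_partition mu, (sumn mu <= n)%N,
                          ~~ odd (n - sumn mu) & (Pdim mu).[z%:~R] = 0].

(* diagram with top arcs {0,1},...,{2k-2,2k-1} and the same bottom arcs,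
   vertical strands elsewhere; here k2 = 2k *)
Definition partner n (a : 'I_n) : 'I_n :=
  odflt a (insub (if odd a then a.-1 else a.+1)).

Definition arc_diag n (k2 : nat) : diagram n :=
  mkdiag (fun x : pt n => match x with
                          | inl a => if (a < k2)%N then inl (partner a) else inr a
                          | inr b => if (b < k2)%N then inr (partner b) else inl b
                          end).

Definition perm_diag n (s : 'S_n) : diagram n :=
  mkdiag (fun x : pt n => match x with
                          | inl i => inr (s i)
                          | inr j => inl ((s^-1)%g j) end).

(* canonical Young tableau of shape l filled row by row with off, off+1, ... *)
Definition trows (l : seq nat) (off : nat) : seq (seq nat) :=
  [seq iota (off + sumn (take i l)) (nth 0 l i) | i <- iota 0 (size l)].
Definition rowid (l : seq nat) (off p : nat) : nat := find (fun row => p \in row) (trows l off).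
Definition colid (l : seq nat) (off p : nat) : nat :=
  index p (nth [::] (trows l off) (rowid l off p)).

(* row / column stabilisers of that tableau inside S_n (fixing points < off) *)
Definition rowstab n (l : seq nat) : {set 'S_n} :=
  [set s : 'S_n | [forall p : 'I_n, if (p < n - sumn l)%N then s p == p
                     else rowid l (n - sumn l) (s p) == rowid l (n - sumn l) p]].
Definition colstab n (l : seq nat) : {set 'S_n} :=
  [set s : 'S_n | [forall p : 'I_n, if (p < n - sumn l)%N then s p == p
                     else colid l (n - sumn l) (s p) == colid l (n - sumn l) p]].

(* Young symmetriser y_lambda on the strands n-|l|, ..., n-1 *)
Definition ysym (K : fieldType) n (m : K) (l : seq nat) : Br K n :=
  bmul m (\sum_(s in rowstab n l) bd K (perm_diag s))
         (\sum_(s in colstab n l) [ffun d => (-1) ^+ odd_perm s * bd K (perm_diag s) d]).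

Definition cellgen (K : fieldType) n (m : K) (l : seq nat) : Br K n :=
  bmul m (bd K (arc_diag n (n - sumn l))) (@ysym K n m l).

Definition nprop n (d : diagram n) : nat := #|[set i : 'I_n | isbot (val d (inl i))]|.

(* membership in J = span of diagrams with fewer than r propagating strands *)
Definition inJ (K : fieldType) n (r : nat) (a : Br K n) : Prop :=
  forall d : diagram n, (r <= nprop d)%N -> a d = 0.

(* rho_lambda(z) <> 0, where rho_lambda is the action of Br_n(m) on the
   cell module W(lambda) = (Br_n(m) * cellgen + J)/J *)
Definition rho_nonzero (K : fieldType) n (m : K) (l : seq nat) (z : Br K n) : Prop :=
  exists a : Br K n, ~ inJ (sumn l) (bmul m z (bmul m a (@cellgen K n m l))).

(* Main.v *)
Require Import Defs.
From HB Require Import structures.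
From mathcomp Require Import all_boot all_order all_algebra all_fingroup.
Set Implicit Arguments. Unset Strict Implicit. Unset Printing Implicit Defensive.
Import GRing.Theory.
Local Open Scope ring_scope.

Section Diag.
Variable n : nat.

Lemma diagK (d : diagram n) x : val d (val d x) = x.
Proof. by have /forallP/(_ x)/andP[/eqP] := valP d. Qed.

Lemma diag_neq (d : diagram n) x : val d x != x.
Proof. by have /forallP/(_ x)/andP[_] := valP d. Qed.

Lemma mkdiag_val (f : pt n -> pt n) : is_diag [ffun x => f x] ->
  val (mkdiag f) = [ffun x => f x].
Proof. by move=> H; rewrite /mkdiag insubT. Qed.

Lemma mkdiag_eq (f : pt n -> pt n) (d : diagram n) :
  (forall x, f x = val d x) -> mkdiag f = d.
Proof.
move=> H; have E : [ffun x => f x] = val d by apply/ffunP => x; rewrite ffunE.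
have Hd : is_diag [ffun x => f x] by rewrite E; exact: valP.
by apply: val_inj; rewrite mkdiag_val // E.
Qed.

Lemma mkdiag_cases (f : pt n -> pt n) x :
  val (mkdiag f) x = f x \/ mkdiag f = id_diag n.
Proof.
rewrite /mkdiag; case: insubP => [u _ Hu|_]; last by right.
by left; rewrite /= Hu ffunE.
Qed.

Lemma mkdiag_valE (f : pt n -> pt n) x : is_diag [ffun x => f x] ->
  val (mkdiag f) x = f x.
Proof. by move=> H; rewrite mkdiag_val // ffunE. Qed.

Lemma nloops0 (d1 d2 : diagram n) : (forall j, ~~ inner d1 d2 j) -> nloops d1 d2 = 0%N.
Proof.
move=> H; rewrite /nloops /n_comp_mem; apply: eq_card0 => j; rewrite !inE.
apply/andP => -[_ /forallP/(_ j)]; rewrite connect0 /= => Hj.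
by move: (H j); rewrite Hj.
Qed.

Lemma mid_edge_sym (d1 d2 : diagram n) : symmetric (mid_edge d1 d2).
Proof.
move=> x y; rewrite /mid_edge.
apply/idP/idP => /orP[/eqP H|/eqP H]; apply/orP;
  [left|right|left|right]; by rewrite -H diagK.
Qed.

Lemma nloops1 (d1 d2 : diagram n) (i j : 'I_n) :
  (forall x, inner d1 d2 x = (x == i) || (x == j)) ->
  mid_edge d1 d2 i j ->
  (forall x y, mid_edge d1 d2 x y -> (y == i) || (y == j) -> (x == i) || (x == j)) ->
  nloops d1 d2 = 1%N.
Proof.
move=> Hin Hij Hcl; rewrite /nloops.
have sym := sym_connect_sym (mid_edge_sym d1 d2).
have cl : closed (mid_edge d1 d2) (pred2 i j).
  apply: intro_closed => // x y Hxy Hx.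
  have Hyx : mid_edge d1 d2 y x by rewrite mid_edge_sym.
  by apply: Hcl Hyx Hx.
rewrite -(n_comp_connect sym i); apply: eq_n_comp_r => x; rewrite !inE.
apply/forallP/idP => [/(_ x)|Hx y].
  rewrite connect0 /= Hin => /orP[/eqP->|/eqP->]; first exact: connect0.
  by apply: connect1.
apply/implyP => Hxy; rewrite Hin.
have := closed_connect cl Hxy; rewrite !inE => <-.
have := closed_connect cl Hx; rewrite !inE eqxx => <- //.
Qed.

End Diag.

Section Conc.
Variable n' : nat.
Local Notation N := n'.+2.

Lemma compL (d1 d2 : diagram N) (f g : 'I_N -> 'I_N) :
  (forall a, val d1 (inl a) = inr (f a)) -> (forall b, val d1 (inr b) = inl (g b)) ->
  forall x, comp_fun d1 d2 x = match x with
   | inl a => match val d2 (inl (f a)) with inr b => inr b | inl j => inl (g j) end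
   | inr b => match val d2 (inr b) with inr b' => inr b' | inl j => inl (g j) end end.
Proof.
move=> hf hg [a|b]; rewrite /comp_fun ?hf /=; case: (val d2 _) => //= j; by rewrite hg.
Qed.

Lemma compR (d1 d2 : diagram N) (f g : 'I_N -> 'I_N) :
  (forall a, val d2 (inl a) = inr (f a)) -> (forall b, val d2 (inr b) = inl (g b)) ->
  forall x, comp_fun d1 d2 x = match x with
   | inl a => match val d1 (inl a) with inl a' => inl a' | inr j => inr (f j) end
   | inr b => match val d1 (inr (g b)) with inl a => inl a | inr j => inr (f j) end end.
Proof.
move=> hf hg [a|b]; rewrite /comp_fun ?hg /=; case: (val d1 _) => //= j; by rewrite hf.
Qed.

Lemma nloopsL (d1 d2 : diagram N) (g : 'I_N -> 'I_N) :
  (forall b, val d1 (inr b) = inl (g b)) -> nloops d1 d2 = 0%N.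
Proof. by move=> hg; apply: nloops0 => j; rewrite /inner hg. Qed.

Lemma nloopsR (d1 d2 : diagram N) (f : 'I_N -> 'I_N) :
  (forall a, val d2 (inl a) = inr (f a)) -> nloops d1 d2 = 0%N.
Proof. by move=> hf; apply: nloops0 => j; rewrite /inner hf andbF. Qed.

Lemma swapK (i j a : 'I_N) : swap i j (swap i j a) = a.
Proof.
rewrite /swap; case: (eqVneq a i) => [->|Hai]; first by rewrite eqxx; case: eqVneq.
case: (eqVneq a j) => [->|Haj]; first by rewrite eqxx.
by rewrite (negbTE Hai) (negbTE Haj).
Qed.

Definition sfun (i j : 'I_N) (x : pt N) : pt N :=
  match x with inl a => inr (swap i j a) | inr b => inl (swap i j b) end.

Lemma s_val (i j : 'I_N) x : val (s_diag i j) x = sfun i j x.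
Proof.
apply: mkdiag_valE; apply/forallP => -[a|a]; rewrite !ffunE /= swapK eqxx //.
Qed.

Definition qfun (i j : 'I_N) (x : pt N) : pt N :=
  match x with
  | inl a => if (a == i) || (a == j) then inl (swap i j a) else inr a
  | inr b => if (b == i) || (b == j) then inr (swap i j b) else inl b end.

Lemma swap_in (i j a : 'I_N) : ((swap i j a == i) || (swap i j a == j)) = ((a == i) || (a == j)).
Proof.
rewrite /swap; case: (eqVneq a i) => [->|Hai]; first by rewrite eqxx orbT.
case: (eqVneq a j) => [_|Haj]; first by rewrite eqxx.
by rewrite (negbTE Hai) (negbTE Haj).
Qed.

Lemma swap_neq (i j a : 'I_N) : i != j -> (a == i) || (a == j) -> swap i j a != a.
Proof.
move=> Hij; rewrite /swap; case: (eqVneq a i) => [->|Hai] /=; first by rewrite eq_sym.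
by move=> /eqP->; rewrite eqxx.
Qed.

Lemma p_val (i j : 'I_N) x : i != j -> val (p_diag i j) x = qfun i j x.
Proof.
move=> Hij; apply: mkdiag_valE; apply/forallP => -[a|a]; rewrite !ffunE /=;
 case: ifP => Ha; rewrite /= ?swap_in ?Ha ?swapK ?eqxx //=; by rewrite swap_neq.
Qed.

Definition pfun (s : 'S_N) (x : pt N) : pt N :=
  match x with inl i => inr (s i) | inr j => inl ((s^-1)%g j) end.

Lemma perm_val (s : 'S_N) x : val (perm_diag s) x = pfun s x.
Proof.
apply: mkdiag_valE; apply/forallP => -[a|a]; rewrite !ffunE /= ?permK ?permKV eqxx //.
Qed.

Lemma pdiag_mul (r c : 'S_N) : diag_mul (perm_diag r) (perm_diag c) = perm_diag (r * c)%g.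
Proof.
apply: mkdiag_eq => x; rewrite (@compR _ _ c (c^-1)%g); last 2 first.
- by move=> a; rewrite perm_val.
- by move=> a; rewrite perm_val.
by case: x => [a|b]; rewrite /= !perm_val /= ?permM // invMg permM.
Qed.

Lemma perm_nloops (r c : 'S_N) : nloops (perm_diag r) (perm_diag c) = 0%N.
Proof. by apply: (@nloopsL _ _ (r^-1)%g) => b; rewrite perm_val. Qed.

Lemma id_mul (d : diagram N) : diag_mul (id_diag N) d = d.
Proof.
apply: mkdiag_eq => x; rewrite (@compL _ _ id id); last 2 first.
- by move=> a; rewrite /= ffunE.
- by move=> a; rewrite /= ffunE.
by case: x => [a|b]; case: (val d _).
Qed.

Lemma id_nloops (d : diagram N) : nloops (id_diag N) d = 0%N.
Proof. by apply: (@nloopsL _ _ id) => b; rewrite /= ffunE. Qed.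

End Conc.

Lemma mkdiag_ext n (f g : pt n -> pt n) : (forall x, f x = g x) -> mkdiag f = mkdiag g.
Proof. by move=> H; rewrite /mkdiag; congr (odflt _ (insub _)); apply/ffunP => x; rewrite !ffunE. Qed.

Definition pnat (a : nat) := if odd a then a.-1 else a.+1.
Lemma pnatK a : pnat (pnat a) = a.
Proof.
rewrite /pnat; case Ho: (odd a).
  by case: a Ho => //= a /negbTE ->.
by rewrite /= Ho.
Qed.

Section Arc.
Variable n' : nat.
Local Notation N := n'.+2.
Variable k2 : nat.
Hypothesis k2ev : ~~ odd k2.
Hypothesis k2N : (k2 <= N)%N.

Lemma pnat_lt a : (a < k2)%N -> (pnat a < k2)%N.
Proof.
rewrite /pnat; case: ifP => Ho Ha; first by case: a Ha Ho => //= a Ha _; apply: ltnW.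
rewrite ltn_neqAle Ha andbT; apply/eqP => E; move: k2ev; by rewrite -E /= Ho.
Qed.

Lemma partner_val (a : 'I_N) : (a < k2)%N -> (partner a : nat) = pnat a.
Proof.
move=> Ha; rewrite /partner; case: insubP => [u _ -> //|/negP[]].
exact: leq_trans (pnat_lt Ha) k2N.
Qed.

Lemma partner_lt (a : 'I_N) : (a < k2)%N -> (partner a < k2)%N.
Proof. by move=> Ha; rewrite partner_val // pnat_lt. Qed.

Lemma partnerK (a : 'I_N) : (a < k2)%N -> partner (partner a) = a.
Proof.
move=> Ha; apply: val_inj => /=.
by rewrite (partner_val (partner_lt Ha)) (partner_val Ha) pnatK.
Qed.

Lemma partner_neq (a : 'I_N) : (a < k2)%N -> partner a != a.
Proof.
move=> Ha; rewrite -(inj_eq val_inj) /= partner_val // /pnat.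
case: ifP => Ho; last by rewrite gtn_eqF.
by case: (a : nat) Ho => //= a' _; rewrite ltn_eqF.
Qed.

Definition gfun (s : 'S_N) (x : pt N) : pt N :=
  match x with
  | inl a => if (a < k2)%N then inl (partner a) else inr (s a)
  | inr b => if (b < k2)%N then inr (partner b) else inl ((s^-1)%g b) end.

Definition fixes (s : 'S_N) := forall p : 'I_N, (p < k2)%N -> s p = p.

Lemma fixesV s : fixes s -> fixes (s^-1)%g.
Proof. by move=> Hs p Hp; rewrite -{1}(Hs p Hp) permK. Qed.

Lemma fixes_ge s (a : 'I_N) : fixes s -> (k2 <= a)%N -> (k2 <= s a)%N.
Proof.
move=> Hs Ha; rewrite leqNgt; apply/negP => H.
have := Hs _ H; move/perm_inj => E; move: Ha; by rewrite -E leqNgt H.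
Qed.

Lemma gfun_diag s : fixes s -> is_diag [ffun x => gfun s x].
Proof.
move=> Hs; apply/forallP => -[a|a]; rewrite !ffunE /=; case: ifP => Ha /=.
- by rewrite (partner_lt Ha) (partnerK Ha) eqxx (partner_neq Ha).
- have Ha' : (k2 <= a)%N by rewrite leqNgt Ha.
  by rewrite ltnNge (fixes_ge Hs Ha') /= permK eqxx.
- by rewrite (partner_lt Ha) (partnerK Ha) eqxx /= (partner_neq Ha).
- have Ha' : (k2 <= a)%N by rewrite leqNgt Ha.
  by rewrite ltnNge (fixes_ge (fixesV Hs) Ha') /= permKV eqxx.
Qed.

Definition Ediag (s : 'S_N) := diag_mul (arc_diag N k2) (perm_diag s).

Lemma arc_eq : arc_diag N k2 = mkdiag (gfun 1).
Proof. by apply: mkdiag_ext => -[a|b] /=; rewrite ?invg1 perm1. Qed.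

Lemma arc_val x : val (arc_diag N k2) x = gfun 1 x.
Proof. by rewrite arc_eq mkdiag_valE // gfun_diag // => p; rewrite perm1. Qed.

Lemma E_eq s : fixes s -> Ediag s = mkdiag (gfun s).
Proof.
move=> Hs; apply: mkdiag_ext => x; rewrite (@compR _ _ _ s (s^-1)%g); last 2 first.
- by move=> a; rewrite perm_val.
- by move=> a; rewrite perm_val.
case: x => [a|b]; rewrite arc_val /=; first by case: (a < k2)%N; rewrite ?perm1.
case Hb: (b < k2)%N.
  by rewrite (fixesV Hs Hb) Hb /= (Hs _ (partner_lt Hb)).
have Hb0 : (k2 <= b)%N by rewrite leqNgt Hb.
have Hb' := fixes_ge (fixesV Hs) Hb0.
by rewrite ltnNge Hb' /= invg1 perm1.
Qed.

Lemma E_val s x : fixes s -> val (Ediag s) x = gfun s x.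
Proof. by move=> Hs; rewrite E_eq // mkdiag_valE // gfun_diag. Qed.

Lemma E_nloops s : nloops (arc_diag N k2) (perm_diag s) = 0%N.
Proof. by apply: (@nloopsR _ _ _ s) => a; rewrite perm_val. Qed.

Lemma E_D0 s : fixes s -> (Ediag s == arc_diag N k2) = (s == 1%g).
Proof.
move=> Hs; apply/idP/eqP => [/eqP E|->].
  apply/permP => p; rewrite perm1; case: (ltnP p k2) => Hp; first exact: Hs.
  have := E_val (inl p) Hs; rewrite E arc_val /= ltnNge Hp /= perm1; by case.
by apply/eqP; rewrite E_eq ?arc_eq // => p; rewrite perm1.
Qed.

End Arc.

Section Arc2.
Variable n' : nat.
Local Notation N := n'.+2.
Variable k2 : nat.
Hypothesis k2ev : ~~ odd k2.
Hypothesis k2N : (k2 <= N)%N.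
Hypothesis k2p : (0 < k2)%N.
Local Notation partnerK := (partnerK k2ev k2N).
Local Notation partner_lt := (partner_lt k2ev k2N).
Local Notation partner_neq := (partner_neq k2ev k2N).
Local Notation E_val := (E_val k2ev k2N).
Local Notation E_D0 := (E_D0 k2ev k2N).

Lemma s_nloops (i j : 'I_N) (d : diagram N) : nloops (s_diag i j) d = 0%N.
Proof. by apply: (@nloopsL _ _ _ (swap i j)) => b; rewrite s_val. Qed.

Lemma partner_inj (a b : 'I_N) : (a < k2)%N -> (b < k2)%N -> partner a = partner b -> a = b.
Proof. by move=> Ha Hb E; rewrite -(partnerK Ha) E partnerK. Qed.

Section Pair.
Variables (i j : 'I_N).
Hypothesis Hi : (i < k2)%N.
Hypothesis Hij : partner i = j.

Lemma Hj : (j < k2)%N. Proof. by rewrite -Hij partner_lt. Qed.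
Lemma ij_neq : i != j. Proof. by rewrite -Hij eq_sym partner_neq. Qed.
Lemma Hji : partner j = i. Proof. by rewrite -Hij partnerK. Qed.

Lemma inS_lt (a : 'I_N) : (a == i) || (a == j) -> (a < k2)%N.
Proof. by case/orP=> /eqP->; rewrite ?Hi ?Hj. Qed.

Lemma partner_S (a : 'I_N) : (a < k2)%N ->
  ((partner a == i) || (partner a == j)) = ((a == i) || (a == j)).
Proof.
move=> Ha; apply/idP/idP.
  case/orP => /eqP E.
  - by rewrite (@partner_inj a j Ha Hj) ?eqxx ?orbT // E Hji.
  - by rewrite (@partner_inj a i Ha Hi) ?eqxx // E Hij.
by case/orP => /eqP ->; rewrite ?Hij ?Hji eqxx ?orbT.
Qed.

Lemma swap_partner (a : 'I_N) : (a == i) || (a == j) -> swap i j a = partner a.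
Proof.
case/orP => /eqP->; rewrite /swap eqxx ?Hij //.
by rewrite eq_sym (negbTE ij_neq) Hji.
Qed.

Variable s : 'S_N.
Hypothesis Hs : fixes k2 s.

Lemma p_E_arc : diag_mul (p_diag i j) (Ediag k2 s) = Ediag k2 s.
Proof.
apply: mkdiag_eq => -[a|b].
- rewrite /comp_fun (p_val _ ij_neq) /=.
  case Ha: ((a == i) || (a == j)).
    by rewrite E_val //= (inS_lt Ha) swap_partner.
  rewrite /= E_val //=; case Hak: (a < k2)%N => //=.
  by rewrite (p_val _ ij_neq) /= partner_S // Ha.
- rewrite /comp_fun E_val //=; case Hbk: (b < k2)%N => //=.
  rewrite (p_val _ ij_neq) /=.
  have Hb0 : (k2 <= b)%N by rewrite leqNgt Hbk.
  have Hb' := fixes_ge (fixesV Hs) Hb0.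
  case Hin: (((s^-1)%g b == i) || ((s^-1)%g b == j)) => //.
  by move: (inS_lt Hin); rewrite ltnNge Hb'.
Qed.

Lemma p_E_nloops : nloops (p_diag i j) (Ediag k2 s) = 1%N.
Proof.
apply: (nloops1 (i:=i) (j:=j)).
- move=> x; rewrite /inner (p_val _ ij_neq) E_val //=.
  case Hx: ((x == i) || (x == j)) => //=; by rewrite (inS_lt Hx).
- by rewrite /mid_edge (p_val _ ij_neq) /= eqxx /= /swap eqxx eqxx.
- move=> x y; rewrite /mid_edge (p_val _ ij_neq) E_val //= => He Hy.
  apply/negPn/negP => Hx; move: He; rewrite (negbTE Hx) /=.
  case Hxk: (x < k2)%N => //= /eqP[E].
  by move: Hy; rewrite -E partner_S // (negbTE Hx).
Qed.

End Pair.

Lemma p_nonarc (i j : 'I_N) (d : diagram N) : (i < j)%N -> ~~ ((i < k2)%N && (partner i == j)) ->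
  diag_mul (p_diag i j) d != arc_diag N k2.
Proof.
move=> Hlt Hna; have Hne : i != j by rewrite neq_ltn Hlt.
apply/eqP => E.
have Hk : (0 < k2)%N := k2p.
case: (mkdiag_cases (comp_fun (p_diag i j) d) (inl i)) => H.
  move: H; rewrite -/(diag_mul _ _) E (arc_val k2ev k2N) /comp_fun (p_val _ Hne) /= eqxx /=.
  rewrite /swap eqxx; case: ifP => Hik //= [Hp].
  by move: Hna; rewrite Hik Hp eqxx.
have := arc_val k2ev k2N (@inl 'I_N 'I_N ord0).
by rewrite -E /diag_mul H /= ffunE /= Hk.
Qed.

Lemma term_p (K : fieldType) (m : K) (i j : 'I_N) (s : 'S_N) : fixes k2 s -> (i < j)%N ->
  ((diag_mul (p_diag i j) (Ediag k2 s) == arc_diag N k2)%:R *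
     m ^+ nloops (p_diag i j) (Ediag k2 s) : K)
  = (((i < k2)%N && (partner i == j)) && (s == 1%g))%:R * m.
Proof.
move=> Hs Hlt; case Ha: ((i < k2)%N && (partner i == j)).
  case/andP: Ha => Hi /eqP Hij.
  by rewrite p_E_arc // p_E_nloops // E_D0 // expr1.
by rewrite (negbTE (p_nonarc _ Hlt _)) ?Ha // !mul0r.
Qed.

End Arc2.

Local Close Scope ring_scope.

Lemma trows_cons x l off : trows (x :: l) off = iota off x :: trows l (off + x).
Proof.
rewrite /trows /= addn0; congr (_ :: _).
rewrite -(addn0 1%N) iotaDl -map_comp; apply: eq_map => i /=.
by rewrite addnA.
Qed.

Lemma flatten_trows l off : flatten (trows l off) = iota off (sumn l).
Proof.
elim: l off => [|x l IH] off; first by [].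
by rewrite trows_cons /= IH -iotaD.
Qed.

Lemma tab_inj l off p q : (off <= p < off + sumn l) -> (off <= q < off + sumn l) ->
  rowid l off p = rowid l off q -> colid l off p = colid l off q -> p = q.
Proof.
have key r : (off <= r < off + sumn l) ->
   nth 0 (nth [::] (trows l off) (rowid l off r)) (colid l off r) = r.
  move=> Hr; have : r \in flatten (trows l off) by rewrite flatten_trows mem_iota.
  case/flattenP => row Hrow Hin.
  have Hh : has (fun row => r \in row) (trows l off) by apply/hasP; exists row.
  have := nth_find [::] Hh; rewrite -/(rowid l off r) => Hr2.
  by rewrite /colid nth_index.
move=> Hp Hq Er Ec; by rewrite -(key p Hp) -(key q Hq) Er Ec.
Qed.

Definition gstab n off (f : nat -> nat) : {set 'S_n} :=
  [set s : 'S_n | [forall p : 'I_n, if (p < off)%N then s p == p else f (s p) == f p]].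

Lemma rowstabE n l : rowstab n l = gstab n (n - sumn l) (rowid l (n - sumn l)).
Proof. by []. Qed.
Lemma colstabE n l : colstab n l = gstab n (n - sumn l) (colid l (n - sumn l)).
Proof. by []. Qed.

Section Stab.
Variables (n off : nat) (f : nat -> nat).

Lemma gstab_fix s (p : 'I_n) : s \in gstab n off f -> (p < off)%N -> s p = p.
Proof. by rewrite inE => /forallP/(_ p); case: ifP => // _ /eqP. Qed.

Lemma gstab_ge s (p : 'I_n) : s \in gstab n off f -> (off <= p)%N -> (off <= s p)%N.
Proof.
move=> Hs Hp; rewrite leqNgt; apply/negP => H.
have := gstab_fix Hs H; move/perm_inj => E; move: Hp; by rewrite -E leqNgt H.
Qed.

Lemma gstab_f s (p : 'I_n) : s \in gstab n off f -> (off <= p)%N -> f (s p) = f p.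
Proof.
rewrite inE => /forallP/(_ p) + Hp; have -> : (p < off)%N = false by rewrite ltnNge Hp.
by move/eqP.
Qed.

Lemma gstabV s : s \in gstab n off f -> (s^-1)%g \in gstab n off f.
Proof.
move=> Hs; rewrite inE; apply/forallP => p; case: ifP => Hp.
  by rewrite -{1}(gstab_fix Hs Hp) permK.
have Hq : (off <= (s^-1)%g p)%N.
  rewrite leqNgt; apply/negP => H; have := gstab_fix Hs H; rewrite permKV => E.
  by move: H; rewrite -E Hp.
by rewrite -{2}(permKV s p) (gstab_f Hs Hq).
Qed.

End Stab.

Lemma stab_triv n l s : (sumn l < n)%N ->
  s \in rowstab n l -> s \in colstab n l -> s = 1%g.
Proof.
move=> Hl; rewrite rowstabE colstabE => Hr Hc.
apply/permP => p; rewrite perm1.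
case: (ltnP p (n - sumn l)) => Hp; first exact: gstab_fix Hr Hp.
have Hsp := gstab_ge Hr Hp.
have Hn : (n - sumn l + sumn l = n)%N by rewrite subnK // ltnW.
apply/val_inj => /=; apply: (@tab_inj l (n - sumn l)).
- by rewrite Hsp Hn ltn_ord.
- by rewrite Hp Hn ltn_ord.
- exact: gstab_f Hr Hp.
- exact: gstab_f Hc Hp.
Qed.

Local Open Scope ring_scope.

Section Alg.
Variable K : fieldType.
Variable n : nat.
Variable m : K.

Lemma bmul_pt (a b : Br K n) d : bmul m a b d =
  \sum_d1 a d1 * \sum_d2 b d2 * ((diag_mul d1 d2 == d)%:R * m ^+ nloops d1 d2).
Proof.
rewrite ffunE; apply: eq_bigr => d1 _; rewrite mulr_sumr; apply: eq_bigr => d2 _.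
by case: (diag_mul d1 d2 == d); rewrite /= ?mulr1n ?mulr0n ?mul1r ?mul0r ?mulr0 ?mulrA.
Qed.

Lemma pick1 (G : diagram n -> K) d0 : \sum_d (d == d0)%:R * G d = G d0.
Proof.
rewrite (bigD1 d0) //= eqxx mul1r big1 ?addr0 // => d /negbTE ->; by rewrite mul0r.
Qed.

Lemma pickS2 (I J : finType) (A : pred I) (B : pred J) (al : I -> J -> K)
  (f : I -> J -> diagram n) (G : diagram n -> K) :
  \sum_d (\sum_(x in A) \sum_(y in B) al x y * (d == f x y)%:R) * G d =
  \sum_(x in A) \sum_(y in B) al x y * G (f x y).
Proof.
under eq_bigr do rewrite mulr_suml.
rewrite exchange_big; apply: eq_bigr => x _.
under eq_bigr do rewrite mulr_suml.
rewrite exchange_big; apply: eq_bigr => y _.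
under eq_bigr do rewrite -mulrA.
by rewrite -mulr_sumr pick1.
Qed.

End Alg.

Section Alg2.
Variable K : fieldType.
Variable n : nat.

Lemma pickSa (I : finType) (A : pred I) (al : I -> K) (f : I -> diagram n) (G : diagram n -> K) :
  \sum_d (\sum_(x in A) al x * (d == f x)%:R) * G d = \sum_(x in A) al x * G (f x).
Proof.
under eq_bigr do rewrite mulr_suml.
rewrite exchange_big; apply: eq_bigr => x _.
under eq_bigr do rewrite -mulrA.
by rewrite -mulr_sumr pick1.
Qed.

Lemma pickT (G : diagram n -> K) :
  \sum_d (Tsum K n) d * G d =
  \sum_(i : 'I_n) \sum_(j : 'I_n | (i < j)%N) (G (s_diag i j) - G (p_diag i j)).
Proof.
rewrite /Tsum.
under eq_bigr do rewrite sum_ffunE mulr_suml.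
rewrite exchange_big; apply: eq_bigr => i _.
under eq_bigr do rewrite sum_ffunE mulr_suml.
rewrite exchange_big; apply: eq_bigr => j _.
under eq_bigr do rewrite /t_elt !ffunE mulrBl.
by rewrite sumrB !pick1.
Qed.

End Alg2.

Lemma pickS1 (K : fieldType) n (I : finType) (A : pred I) (f : I -> diagram n) (G : diagram n -> K) :
  \sum_d (\sum_(x in A) (d == f x)%:R) * G d = \sum_(x in A) G (f x).
Proof.
under eq_bigr do under eq_bigr do rewrite -[(_ == _)%:R]mul1r.
by rewrite pickSa; under eq_bigr do rewrite mul1r.
Qed.

Section Main.
Variable K : fieldType.
Variable n' : nat.
Local Notation N := n'.+2.
Variable lam : seq nat.
Hypothesis Hlt : (sumn lam < N)%N.
Hypothesis Hev : ~~ odd (N - sumn lam)%N.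
Local Notation k2 := (N - sumn lam)%N.
Variable m : K.

Lemma k2N : (k2 <= N)%N. Proof. exact: leq_subr. Qed.
Lemma k2p : (0 < k2)%N. Proof. by rewrite subn_gt0. Qed.

Local Notation R := (rowstab N lam).
Local Notation C := (colstab N lam).
Local Notation sg c := ((-1) ^+ odd_perm c).

Lemma id_layer (b : Br K N) d : bmul m (bd K (id_diag N)) b d = b d.
Proof.
rewrite bmul_pt.
under eq_bigr do rewrite ffunE.
rewrite pick1.
under eq_bigr do rewrite id_mul id_nloops expr0 mulr1.
under eq_bigr do rewrite mulrC.
by rewrite pick1.
Qed.

Lemma ysym_pt d4 : ysym N m lam d4 =
  \sum_(r in R) \sum_(c in C) sg c * (d4 == perm_diag (r * c)%g)%:R :> K.
Proof.
rewrite /ysym bmul_pt.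
under eq_bigr do rewrite sum_ffunE.
under eq_bigr do under eq_bigr do rewrite ffunE.
rewrite pickS1; apply: eq_bigr => r _.
under eq_bigr do rewrite sum_ffunE.
under eq_bigr do under eq_bigr do rewrite !ffunE.
rewrite pickSa; apply: eq_bigr => c _.
by rewrite pdiag_mul perm_nloops expr0 mulr1 eq_sym.
Qed.

Lemma cellgen_pt d2 : cellgen N m lam d2 =
  \sum_(r in R) \sum_(c in C) sg c * (d2 == Ediag k2 (r * c)%g)%:R :> K.
Proof.
rewrite /cellgen bmul_pt.
under eq_bigr do rewrite ffunE.
rewrite pick1.
under eq_bigr do rewrite ysym_pt.
rewrite pickS2; apply: eq_bigr => r _; apply: eq_bigr => c _.
by rewrite E_nloops expr0 mulr1 eq_sym.
Qed.

Lemma stab1 : (1%g : 'S_N) \in R /\ (1%g : 'S_N) \in C.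
Proof.
by split; rewrite inE; apply/forallP => p; rewrite perm1 eqxx; case: ifP.
Qed.

Lemma fixes_rc r c : r \in R -> c \in C -> fixes k2 (r * c)%g.
Proof.
rewrite rowstabE colstabE => Hr Hc p Hp.
by rewrite permM (gstab_fix Hr Hp) (gstab_fix Hc Hp).
Qed.

Lemma rc1 r c : r \in R -> c \in C -> ((r * c)%g == 1%g) = (r == 1%g) && (c == 1%g).
Proof.
move=> Hr Hc; apply/idP/idP => [/eqP E|/andP[/eqP-> /eqP->]]; last by rewrite mulg1.
have Ec : c = (r^-1)%g by rewrite -[c](mulKg r) E mulg1.
have HcR : c \in R by rewrite Ec rowstabE gstabV.
have c1 := stab_triv Hlt HcR Hc.
by move: E; rewrite c1 mulg1 => ->; rewrite eqxx.
Qed.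

Lemma Bsum (b : bool) : \sum_(r in R) \sum_(c in C) sg c * ((b && ((r * c)%g == 1%g))%:R) = b%:R :> K.
Proof.
rewrite (bigD1 1%g) ?(proj1 stab1) //= [X in _ + X]big1 ?addr0; last first.
  move=> r /andP[Hr Hr1]; apply: big1 => c Hc.
  by rewrite rc1 // (negbTE Hr1) andbF mulr0.
rewrite (bigD1 1%g) ?(proj2 stab1) //= [X in _ + X]big1 ?addr0; last first.
  move=> c /andP[Hc Hc1]; rewrite rc1 ?(proj1 stab1) // (negbTE Hc1) andbF.
  by rewrite andbF mulr0.
rewrite mulg1 eqxx andbT.
by have -> : odd_perm (1%g : 'S_N) = false := odd_perm1 _; rewrite expr0 mul1r.
Qed.

Definition Aint : int := \sum_(i : 'I_N) \sum_(j : 'I_N | (i < j)%N) \sum_(r in R) \sum_(c in C)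
  ((-1) ^+ odd_perm c * (diag_mul (s_diag i j) (Ediag k2 (r * c)%g) == arc_diag N k2)%:Z).

Definition Bnat : nat := (\sum_(i : 'I_N) \sum_(j : 'I_N | (i < j)%N)
  ((i < k2)%N && (partner i == j)))%N.

Lemma X_pt : bmul m (Tsum K N) (bmul m (bd K (id_diag N)) (cellgen N m lam)) (arc_diag N k2)
  = Aint%:~R - Bnat%:R * m.
Proof.
rewrite bmul_pt.
under eq_bigr do under eq_bigr do rewrite id_layer cellgen_pt.
under eq_bigr do rewrite pickS2.
rewrite pickT.
rewrite /Aint /Bnat rmorph_sum natr_sum mulr_suml -sumrB; apply: eq_bigr => i _.
rewrite rmorph_sum natr_sum mulr_suml -sumrB; apply: eq_bigr => j Hij.
rewrite -(Bsum ((i < k2)%N && (partner i == j))) mulr_suml.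
apply: congr2; last first.
  congr (- _); apply: eq_bigr => r Hr; rewrite mulr_suml; apply: eq_bigr => c Hc.
  by rewrite (term_p Hev k2N k2p m (fixes_rc Hr Hc) Hij) mulrA.
rewrite rmorph_sum; apply: eq_bigr => r Hr; rewrite rmorph_sum; apply: eq_bigr => c Hc.
by rewrite s_nloops expr0 mulr1 !rmorphM /= rmorph_sign -natz rmorph_nat.
Qed.

End Main.

Lemma Bnat_gt0 n' lam : ~~ odd (n'.+2 - sumn lam)%N -> (sumn lam < n'.+2)%N -> (0 < Bnat n' lam)%N.
Proof.
move=> Hev Hlt; rewrite /Bnat (bigD1 ord0) //=.
apply: leq_trans (leq_addr _ _).
rewrite (bigD1 (lift ord0 ord0)) //=.
apply: leq_trans (leq_addr _ _).
rewrite subn_gt0 Hlt /=.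
have H0 : (@ord0 n'.+1 < n'.+2 - sumn lam)%N by rewrite subn_gt0.
by rewrite -(inj_eq val_inj) /= (partner_val Hev (leq_subr _ _) H0).
Qed.

Lemma nprop_arc n' lam : (sumn lam < n'.+2)%N -> ~~ odd (n'.+2 - sumn lam)%N ->
  (sumn lam <= nprop (arc_diag n'.+2 (n'.+2 - sumn lam)))%N.
Proof.
move=> Hlt Hev; set k2 := (n'.+2 - sumn lam)%N.
have Hk : (k2 + sumn lam = n'.+2)%N by rewrite subnK // ltnW.
have Hf (x : 'I_(sumn lam)) : (k2 + x < n'.+2)%N by rewrite -Hk ltn_add2l.
pose f (x : 'I_(sumn lam)) : 'I_n'.+2 := Ordinal (Hf x).
have finj : injective f by move=> x y /(congr1 val) /= /addnI /val_inj.
rewrite /nprop; apply: (@leq_trans #|f @: [set: 'I_(sumn lam)]|).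
  by rewrite card_imset // cardsT card_ord.
apply: subset_leq_card; apply/subsetP => y.
case/imsetP => x _ ->; rewrite inE (arc_val Hev (leq_subr _ _)) /=.
by rewrite -/k2 ltnNge leq_addr.
Qed.

Lemma ratr_frac (K : fieldType) (charK0 : [pchar K] =i pred0) (a : int) (b : nat) :
  (0 < b)%N -> ratr (a%:~R / b%:R : rat) = a%:~R / b%:R :> K.
Proof.
move=> Hb; set q : rat := a%:~R / b%:R.
have Hb0 : (b%:R : rat) != 0 by rewrite Num.Theory.pnatr_eq0 -lt0n.
have HbK : (b%:R : K) != 0 by move/pcharf0P: charK0 => ->; rewrite -lt0n.
have Hq : q * b%:R = a%:~R by rewrite /q mulfVK.
have Eint : (numq q * b%:Z = a * denq q)%R.
  apply/eqP; rewrite -(eqr_int rat) !rmorphM /= -Hq mulrAC numqE -natz rmorph_nat.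
  done.
rewrite /ratr; move: Eint (denq_gt0 q); case: (denq q) => // d Eint Hd.
have HdK : (d%:R : K) != 0 by move/pcharf0P: charK0 => ->; rewrite -lt0n.
move/(congr1 (fun z : int => (z%:~R : K))): Eint; rewrite !rmorphM /= -!natz !rmorph_nat => E.
apply: (mulIf HdK); rewrite divfK //.
by apply: (mulIf HbK); rewrite mulrAC divfK // E.
Qed.

Unset Implicit Arguments.
Theorem mainTheorem8 (K : fieldType) (charK0 : [pchar K] =i pred0)
  (n : nat) (lam : seq nat) :
  (2 <= n)%N -> is_partition lam -> (sumn lam < n)%N -> ~~ odd (n - sumn lam) ->
  exists F : seq rat,
    forall m : K,
      (forall z : int, in_Sn n z -> m != z%:~R) ->
      (forall q : rat, q \in F -> m != ratr q) ->
      rho_nonzero m lam (Tsum K n).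
Proof.
case: n => [|[|n']] // _ _ Hlt Hev.
exists [:: (Aint n' lam)%:~R / (Bnat n' lam)%:R].
move=> m _ HF; exists (bd K (id_diag n'.+2)) => HJ.
have := HJ _ (nprop_arc Hlt Hev); rewrite (X_pt Hlt Hev) => /eqP.
rewrite subr_eq0 => /eqP E.
have HB : (Bnat n' lam)%:R != 0 :> K.
  by move/pcharf0P: charK0 => ->; rewrite -lt0n Bnat_gt0.
move: (HF _ (mem_head _ _)); rewrite ratr_frac ?Bnat_gt0 // E mulrC mulKf //.
by rewrite eqxx.
Qed.
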